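(* For every $n\geq 4$, the clique number of $\mathrm{KG}(\mathcal{T}_n)$ equals $\lfloor n/2\rfloor$. In particular $\chi(\mathrm{KG}(\mathcal{T}_n))\ge\lfloor n/2\rfloor$.
   Context: Label the vertices of a convex $n$-gon by $1,\dots,n$ in cyclic order; $\mathrm{Diag}_n = \{\{i,j\} \subseteq [n]: i-j\not\equiv \pm1 \pmod n\}$; a triangulation is identified with its set of $n-3$ diagonals, and $\mathcal{T}_n$ is the set of triangulations. $\mathrm{KG}(\mathcal{T}_n)$ is the graph on $\mathcal{T}_n$ in which two triangulations are adjacent iff they share no diagonal. *)

(* Defs.v *)
(* Vertices of the convex n-gon are labelled 0..n-1 (type 'I_n)
   in cyclic order, instead of 1..n. *)
From mathcomp Require Import all_boot all_order.
Set Implicit Arguments. Unset Strict Implicit. Unset Printing Implicit Defensive.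

Definition cyc_adj (n : nat) (i j : 'I_n) : bool :=
  ((i.+1 %% n) == j) || ((j.+1 %% n) == i).

Definition is_diag (n : nat) (d : {set 'I_n}) : bool :=
  [exists i : 'I_n, exists j : 'I_n,
     [&& i != j, d == [set i; j] & ~~ cyc_adj i j]].

(* Two diagonals cross (in their interiors) iff their endpoints strictly
   interleave in the cyclic order. *)
Definition crossing (n : nat) (d e : {set 'I_n}) : bool :=
  [exists a : 'I_n, exists b : 'I_n, exists c : 'I_n, exists f : 'I_n,
     [&& d == [set a; b], e == [set c; f] & (a < c < b) && (b < f)]].

(* A triangulation, identified with its set of diagonals: a set of n-3
   pairwise non-crossing diagonals. *)
Definition is_triangulation (n : nat) (T : {set {set 'I_n}}) : bool :=
  [&& [forall d in T, is_diag d],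
      [forall d in T, forall e in T, ~~ crossing d e]
    & #|T| == n - 3].

Definition KG_adj (n : nat) (T1 T2 : {set {set 'I_n}}) : bool :=
  [&& is_triangulation T1, is_triangulation T2 & [disjoint T1 & T2]].

Definition is_KG_clique (n : nat) (Q : {set {set {set 'I_n}}}) : bool :=
  [forall T in Q, is_triangulation T] &&
  [forall T1 in Q, forall T2 in Q, (T1 != T2) ==> KG_adj T1 T2].

Definition KG_clique_number (n : nat) : nat :=
  \max_(Q : {set {set {set 'I_n}}} | is_KG_clique Q) #|Q|.

Definition KG_proper_coloring (n k : nat) (c : {set {set 'I_n}} -> 'I_k) : Prop :=
  forall T1 T2 : {set {set 'I_n}}, KG_adj T1 T2 -> c T1 != c T2.

(* Main.v *)
Require Import Defs.
From mathcomp Require Import all_boot all_order zify.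
Set Implicit Arguments. Unset Strict Implicit.

Lemma pairs_eq (T : finType) (a b c d : T) :
  [set a; b] = [set c; d] -> (a = c /\ b = d) \/ (a = d /\ b = c).
Proof.
move=> E.
have ha : a \in [set c; d] by rewrite -E !inE eqxx.
have hb : b \in [set c; d] by rewrite -E !inE eqxx orbT.
have hc : c \in [set a; b] by rewrite E !inE eqxx.
have hd : d \in [set a; b] by rewrite E !inE eqxx orbT.
move: ha hb hc hd; rewrite !inE.
move=> /orP[/eqP->|/eqP->] /orP[/eqP->|/eqP->] /orP[/eqP|/eqP] ? /orP[/eqP|/eqP] ?;
  subst; auto.
Qed.

Lemma pair_sum m (a b c d : 'I_m) :
  [set a; b] = [set c; d] -> (a:nat) + b = (c:nat) + d.
Proof. by case/pairs_eq => -[-> ->] //; rewrite addnC. Qed.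

Lemma succmod N x : x < N -> (x.+1 %% N = x.+1 /\ x.+1 < N) \/ (x.+1 = N /\ x.+1 %% N = 0).
Proof.
move=> h; case: (ltnP x.+1 N) => h'.
  by left; rewrite modn_small.
right; have E : x.+1 = N by lia.
by rewrite E modnn.
Qed.

Definition pv n s l := if l./2 <= s then s - l./2 else s + n.+1 - l./2.
Definition qv (s l : nat) := s + (l - l./2).

Lemma zfacts n s l : s < n.+1./2 -> 2 <= l <= n.+1 - 2 ->
  (l = l %% 2 + l./2 * 2 /\ l %% 2 <= 1 /\ n.+1 = n.+1 %% 2 + n.+1./2 * 2 /\
      n.+1 %% 2 <= 1 /\ qv s l = s + l - l./2 /\
      ((l./2 <= s /\ pv n s l = s - l./2) \/ (s < l./2 /\ pv n s l = s + n.+1 - l./2))).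
Proof.
move=> hs hl.
have e1 : l = l %% 2 + l./2 * 2 by rewrite -[LHS](odd_double_half l) -muln2 modn2.
have e2 : n.+1 = n.+1 %% 2 + n.+1./2 * 2
  by rewrite -[LHS](odd_double_half n.+1) -muln2 modn2.
have m1 : l %% 2 <= 1 by rewrite modn2; case: odd.
have m2 : n.+1 %% 2 <= 1 by rewrite modn2; case: odd.
do 5 (split => //); first by rewrite /qv; lia.
rewrite /pv; case: leqP => h; [left|right]; by split.
Qed.

Definition zd n s (j : 'I_(n.+1 - 3)) : {set 'I_n.+1} :=
  [set inord (pv n s (j + 2)); inord (qv s (j + 2))].
Arguments zd : clear implicits.
Definition Tz n s : {set {set 'I_n.+1}} := [set zd n s j | j : 'I_(n.+1 - 3)].

Lemma zbounds n s l : 3 <= n -> s < n.+1./2 -> 2 <= l <= n.+1 - 2 ->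
  pv n s l < n.+1 /\ qv s l < n.+1.
Proof. move=> h3 hs hl; have := zfacts hs hl; lia. Qed.

Lemma zd_sum n s (j : 'I_(n.+1 - 3)) (a b : 'I_n.+1) : 3 <= n -> s < n.+1./2 ->
  zd n s j = [set a; b] ->
  (a:nat) + b = pv n s (j+2) + qv s (j+2) /\ 2 <= j + 2 <= n.+1 - 2.
Proof.
move=> h3 hs E.
have hl : 2 <= j + 2 <= n.+1 - 2 by have := ltn_ord j; lia.
have [b1 b2] := zbounds h3 hs hl.
split => //; move/pair_sum: E; rewrite !inordK //; lia.
Qed.

Lemma Tz_diag n s d : 3 <= n -> s < n.+1./2 -> d \in Tz n s -> is_diag d.
Proof.
move=> h3 hs /imsetP[j _ ->].
have hl : 2 <= j + 2 <= n.+1 - 2 by have := ltn_ord j; lia.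
have [b1 b2] := zbounds h3 hs hl.
have F := zfacts hs hl.
apply/existsP; exists (inord (pv n s (j + 2))); apply/existsP;
  exists (inord (qv s (j + 2))).
rewrite eqxx /=.
apply/andP; split.
  apply/eqP => /(congr1 val); rewrite /= !inordK //; lia.
rewrite /cyc_adj !inordK // negb_or; apply/andP; split; apply/eqP => E.
  have := succmod b1; lia.
have := succmod b2; lia.
Qed.

Lemma Tz_nc n s d e : 3 <= n -> s < n.+1./2 -> d \in Tz n s -> e \in Tz n s ->
  ~~ crossing d e.
Proof.
move=> h3 hs /imsetP[j1 _ ->] /imsetP[j2 _ ->].
apply/negP => /existsP[a /existsP[b /existsP[c /existsP[f
   /and3P[/eqP Ed /eqP Ee /andP[/andP[h1 h2] h3']]]]]].
have [S1 L1] := zd_sum h3 hs Ed.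
have [S2 L2] := zd_sum h3 hs Ee.
have F1 := zfacts hs L1.
have F2 := zfacts hs L2.
have := ltn_ord f.
lia.
Qed.

Lemma zd_inj n s : 3 <= n -> s < n.+1./2 -> injective (zd n s).
Proof.
move=> h3 hs j1 j2 E.
have hl1 : 2 <= j1 + 2 <= n.+1 - 2 by have := ltn_ord j1; lia.
have hl2 : 2 <= j2 + 2 <= n.+1 - 2 by have := ltn_ord j2; lia.
have [b1 b2] := zbounds h3 hs hl1.
have [b3 b4] := zbounds h3 hs hl2.
have F1 := zfacts hs hl1.
have F2 := zfacts hs hl2.
apply: val_inj => /=.
case/pairs_eq: E => -[/(congr1 val) + /(congr1 val)]; rewrite /= !inordK //; lia.
Qed.

Lemma Tz_card n s : 3 <= n -> s < n.+1./2 -> #|Tz n s| = n.+1 - 3.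
Proof.
move=> h3 hs; rewrite /Tz card_imset ?card_ord //; exact: zd_inj.
Qed.

Lemma Tz_tri n s : 3 <= n -> s < n.+1./2 -> is_triangulation (Tz n s).
Proof.
move=> h3 hs; apply/and3P; split.
- apply/forallP => d; apply/implyP => hd; exact: (Tz_diag h3 hs hd).
- apply/forallP => d; apply/implyP => hd; apply/forallP => e; apply/implyP => he.
  exact: (Tz_nc h3 hs hd he).
- by rewrite Tz_card.
Qed.

Lemma Tz_disj n s1 s2 : 3 <= n -> s1 < n.+1./2 -> s2 < n.+1./2 -> s1 != s2 ->
  [disjoint Tz n s1 & Tz n s2].
Proof.
move=> h3 hs1 hs2 ne; apply/pred0P => d /=.
apply/negP => /andP[/imsetP[j1 _ E1] /imsetP[j2 _ E2]].
have hl1 : 2 <= j1 + 2 <= n.+1 - 2 by have := ltn_ord j1; lia.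
have hl2 : 2 <= j2 + 2 <= n.+1 - 2 by have := ltn_ord j2; lia.
have [b1 b2] := zbounds h3 hs1 hl1.
have [b3 b4] := zbounds h3 hs2 hl2.
have F1 := zfacts hs1 hl1.
have F2 := zfacts hs2 hl2.
move: E2; rewrite E1 => /pair_sum; rewrite !inordK //.
move: ne => /eqP; lia.
Qed.

Lemma cyc_adjC N (a b : 'I_N) : cyc_adj a b = cyc_adj b a.
Proof. by rewrite /cyc_adj orbC. Qed.

Lemma vertex_count N (i : 'I_N) (U : {set {set 'I_N}}) : 3 <= N ->
  (forall d, d \in U -> is_diag d) ->
  #|[set d in U | i \in d]| <= N - 3.
Proof.
move=> h3 hU.
have N0 : 0 < N by lia.
pose si : 'I_N := Ordinal (ltn_pmod i.+1 N0).
pose pi : 'I_N := Ordinal (ltn_pmod (i + N.-1) N0).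
have hi := ltn_ord i.
have Fs := succmod hi.
have Fp : ((i:nat) = 0 /\ (i + N.-1) %% N = N.-1) \/ (1 <= i /\ (i + N.-1) %% N = i.-1).
  rewrite /=; case: (posnP i) => h.
    by left; split => //; rewrite h add0n modn_small //; lia.
  right; split => //; have -> : i + N.-1 = i.-1 + N by lia.
  by rewrite modnDr modn_small //; lia.
have a1 : cyc_adj i si by rewrite /cyc_adj eqxx.
have a2 : cyc_adj i pi.
  rewrite /cyc_adj /=; apply/orP; right.
 rewrite -addn1 modnDml -addnA addn1 prednK // modnDr modn_small //.
pose J := [set j | (j != i) && ~~ cyc_adj i j].
pose g := fun j : 'I_N => [set i; j].
have sub : [set d in U | i \in d] \subset g @: J.
  apply/subsetP => d; rewrite inE => /andP[dU id].
  have /existsP[a /existsP[b /and3P[ab /eqP E nab]]] := hU d dU.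
  move: id; rewrite E !inE => /orP[/eqP ia|/eqP ib].
    apply/imsetP; exists b; last by rewrite /g ia.
    by rewrite inE ia eq_sym ab nab.
  apply/imsetP; exists a; last by rewrite /g ib setUC.
  by rewrite inE ib ab cyc_adjC nab.
have ne1 : i != si.
 apply/eqP => /(congr1 val) /= E; rewrite -E in Fs; lia.
have ne2 : i != pi.
 apply/eqP => /(congr1 val) /= E; rewrite -E in Fp; lia.
have ne3 : si != pi.
 apply/eqP => /(congr1 val) /= E; rewrite E in Fs; lia.
have c3 : #|[set i; si; pi]| = 3.
  by rewrite -setUA cardsU1 cards2 !inE ne3 (negbTE ne1) (negbTE ne2).
have JC : J \subset ~: [set i; si; pi].
  apply/subsetP => j; rewrite !inE => /andP[ji nj].
  rewrite (negbTE ji) /=; apply/negP => /orP[/eqP E|/eqP E]; move: nj;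
    by rewrite E ?a1 ?a2.
have cC : #|~: [set i; si; pi]| = N - 3.
  have := cardsC [set i; si; pi]; rewrite c3 card_ord; lia.
apply: (leq_trans (subset_leq_card sub)).
apply: (leq_trans (leq_imset_card _ _)).
by rewrite -cC subset_leq_card.
Qed.

Lemma diag_count N (U : {set {set 'I_N}}) : 3 <= N ->
  (forall d, d \in U -> is_diag d) -> 2 * #|U| <= N * (N - 3).
Proof.
move=> h3 hU.
have E1 : \sum_(d in U) #|d| = 2 * #|U|.
  rewrite -sum1_card big_distrr /=; apply: eq_bigr => d dU.
  have /existsP[a /existsP[b /and3P[ab /eqP E _]]] := hU d dU.
  by rewrite E cards2 ab muln1.
have E2 : \sum_(d in U) #|d| = \sum_(i : 'I_N) #|[set d in U | i \in d]|.
  under eq_bigr => d _ do rewrite -sum1_card big_mkcond /=.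
  rewrite exchange_big /=; apply/eq_bigr => i _.
  rewrite -sum1_card [LHS]big_mkcond [RHS]big_mkcond /=; apply/eq_bigr => d _.
  by rewrite inE; case: (d \in U); case: (i \in d).
rewrite -E1 E2.
apply: (@leq_trans (\sum_(i : 'I_N) (N - 3))).
  by apply: leq_sum => i _; exact: vertex_count.
by rewrite sum_nat_const card_ord.
Qed.

Lemma clique_bound N (Q : {set {set {set 'I_N}}}) : 4 <= N ->
  is_KG_clique Q -> #|Q| <= N./2.
Proof.
move=> h4 /andP[/forallP hT /forallP hA].
have tri : forall T, T \in Q -> is_triangulation T by move=> T; apply/implyP.
have triv : trivIset Q.
  apply/trivIsetP => A B AQ BQ ne.
  by have := implyP (forallP (implyP (hA A) AQ) B) BQ; rewrite ne => /and3P[].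
have cU : #|cover Q| = #|Q| * (N - 3).
  rewrite (eqP (etrans (leq_card_cover Q).2 triv)) -sum_nat_const.
  apply: eq_bigr => T TQ; by have /and3P[_ _ /eqP] := tri T TQ.
have dU : forall d, d \in cover Q -> is_diag d.
  move=> d /bigcupP[T TQ dT].
  have /and3P[/forallP h _ _] := tri T TQ.
  exact: (implyP (h d) dT).
have := diag_count (ltnW h4) dU; rewrite cU mulnA.
rewrite leq_pmul2r; last by lia.
have := odd_double_half N; lia.
Qed.

Definition Qz n : {set {set {set 'I_n.+1}}} := [set Tz n s | s : 'I_(n.+1./2)].

Lemma Qz_adj n (T1 T2 : {set {set 'I_n.+1}}) : 3 <= n ->
  T1 \in Qz n -> T2 \in Qz n -> T1 != T2 -> KG_adj T1 T2.
Proof.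
move=> h3 /imsetP[s1 _ ->] /imsetP[s2 _ ->] ne.
rewrite /KG_adj !Tz_tri //; apply: Tz_disj => //.
by apply: contra ne => /eqP ->.
Qed.

Lemma Qz_clique n : 3 <= n -> is_KG_clique (Qz n).
Proof.
move=> h3; apply/andP; split.
  apply/forallP => T; apply/implyP => /imsetP[s _ ->]; exact: Tz_tri.
apply/forallP => T1; apply/implyP => h1; apply/forallP => T2; apply/implyP => h2.
apply/implyP => ne; exact: Qz_adj.
Qed.

Lemma Qz_card n : 3 <= n -> #|Qz n| = n.+1./2.
Proof.
move=> h3; rewrite /Qz card_imset ?card_ord // => s1 s2 E.
apply/eqP; apply/negPn/negP => ne.
have D := Tz_disj h3 (ltn_ord s1) (ltn_ord s2) ne.
have : 0 < #|Tz n s1| by rewrite Tz_card //; lia.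
rewrite card_gt0 => /set0Pn[x hx].
by have := (pred0P D) x; rewrite /= -E hx.
Qed.

Theorem mainTheorem15 (n : nat) : 4 <= n ->
  KG_clique_number n = n./2 /\
  (forall (k : nat) (c : {set {set 'I_n}} -> 'I_k),
      KG_proper_coloring c -> n./2 <= k).
Proof.
case: n => [//|n] h4.
have h3 : 3 <= n by lia.
split.
  apply/eqP; rewrite eqn_leq; apply/andP; split.
    by apply/bigmax_leqP => Q hQ; apply: clique_bound.
  rewrite -(Qz_card h3); exact: (leq_bigmax_cond _ (Qz_clique h3)).
move=> k c hc.
rewrite -(Qz_card h3).
have inj : {in Qz n &, injective c}.
  move=> T1 T2 h1 h2 E; apply/eqP; apply/negPn/negP => ne.
  by move: (hc _ _ (Qz_adj h3 h1 h2 ne)); rewrite E eqxx.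
rewrite -(card_in_imset inj).
by apply: leq_trans (max_card _) _; rewrite card_ord.
Qed.
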